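(* Let $s=0$, $\lambda\in\mathbb{C}$ and $k\in\mathbb{Z}\setminus\{0\}$. Every even superderivation of $\mathfrak{L}^0_\lambda$ of degree $k$ is inner; more precisely, it equals $\mathrm{ad}(aL_k+bI_k)$ for some $a,b\in\mathbb{C}$.
   Context: For $s\in\{0,\tfrac12\}$ and $\lambda\in\mathbb{C}$, $\mathfrak{L}^s_\lambda$ is the complex Lie superalgebra with basis $\{L_m,I_m,G_p,H_p : m\in\mathbb{Z},\ p\in s+\mathbb{Z}\}$, even part spanned by the $L_m,I_m$, odd part spanned by the $G_p,H_p$, and brackets $[L_m,L_n]=(m-n)L_{m+n}$, $[L_m,I_n]=(m-n)I_{m+n}$, $[L_m,H_p]=(\tfrac m2-p)H_{m+p}$, $[L_m,G_p]=(\tfrac m2-p)G_{m+p}+\lambda(m+1)H_{m+p}$, $[I_m,G_p]=(m-2p)H_{m+p}$, $[G_p,G_q]=I_{p+q}$, plus those given by super-antisymmetry $[y,x]=-(-1)^{|x||y|}[x,y]$; all other brackets of basis elements are zero. The algebra is graded by $\tfrac12\mathbb{Z}$: $\mathfrak{L}_r$ is spanned by the basis elements with index $r$. A superderivation of parity $a$ is a linear map $D$ shifting parity by $a$ with $D([x,y])=[D(x),y]+(-1)^{a|x|}[x,D(y)]$ for homogeneous $x,y$; it has degree $r$ if $D(\mathfrak{L}_q)\subset\mathfrak{L}_{q+r}$ for all $q$. $\mathrm{ad}\,x(y)=[x,y]$. *)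

(* Defs.v *)
From HB Require Import structures.
From mathcomp Require Import all_boot all_order all_algebra.
Set Implicit Arguments. Unset Strict Implicit. Unset Printing Implicit Defensive.
Import Order.TTheory GRing.Theory Num.Theory.
Local Open Scope ring_scope.

(* Basis of L^0_lambda (s = 0, so all indices are integers). *)
Inductive basis := bL of int | bI of int | bG of int | bH of int.

Definition basis_code (b : basis) : nat * int :=
  match b with bL m => (0%N, m) | bI m => (1%N, m) | bG m => (2%N, m) | bH m => (3%N, m) end.
Definition basis_decode (c : nat * int) : option basis :=
  match c with
  | (0%N, m) => Some (bL m) | (1%N, m) => Some (bI m)
  | (2%N, m) => Some (bG m) | (3%N, m) => Some (bH m) | _ => None end.
Lemma basis_codeK : pcancel basis_code basis_decode. Proof. by case. Qed.
HB.instance Definition _ := Equality.copy basis (pcan_type basis_codeK).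

(* parity: false = even (L, I), true = odd (G, H) *)
Definition bpar (b : basis) : bool :=
  match b with bL _ | bI _ => false | bG _ | bH _ => true end.
Definition bdeg (b : basis) : int :=
  match b with bL m | bI m | bG m | bH m => m end.

Section Alg.
Variable F : fieldType.

(* An element of the algebra is a formal finite linear combination of basis
   vectors; two formal combinations are the same element iff they have the
   same coefficients. *)
Definition elt := seq (F * basis).
Definition coef (v : elt) (e : basis) : F := \sum_(p <- v | p.2 == e) p.1.
Definition eq_elt (v w : elt) : Prop := forall e, coef v e = coef w e.
Definition scale_elt (a : F) (v : elt) : elt := [seq (a * p.1, p.2) | p <- v].

Definition half : F := 2^-1.

(* Brackets of basis elements (including those given by super-antisymmetry). *)
Definition bbr (lam : F) (x y : basis) : elt :=
  match x, y with
  | bL m, bL n => [:: ((m - n)%:~R, bL (m + n))]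
  | bL m, bI n => [:: ((m - n)%:~R, bI (m + n))]
  | bI n, bL m => [:: (- (m - n)%:~R, bI (m + n))]
  | bL m, bH p => [:: (m%:~R * half - p%:~R, bH (m + p))]
  | bH p, bL m => [:: (- (m%:~R * half - p%:~R), bH (m + p))]
  | bL m, bG p => [:: (m%:~R * half - p%:~R, bG (m + p));
                      (lam * (m + 1)%:~R, bH (m + p))]
  | bG p, bL m => [:: (- (m%:~R * half - p%:~R), bG (m + p));
                      (- (lam * (m + 1)%:~R), bH (m + p))]
  | bI m, bG p => [:: ((m - 2 * p)%:~R, bH (m + p))]
  | bG p, bI m => [:: (- (m - 2 * p)%:~R, bH (m + p))]
  | bG p, bG q => [:: (1, bI (p + q))]
  | _, _ => [::]
  end.

Definition br (lam : F) (v w : elt) : elt :=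
  flatten [seq scale_elt (p.1 * q.1) (bbr lam p.2 q.2) | p <- v, q <- w].

Definition lin_ext (d : basis -> elt) (v : elt) : elt :=
  flatten [seq scale_elt p.1 (d p.2) | p <- v].

Definition in_parity (a : bool) (v : elt) : Prop :=
  forall e, coef v e != 0 -> bpar e = a.
Definition in_degree (q : int) (v : elt) : Prop :=
  forall e, coef v e != 0 -> bdeg e = q.

Definition even_superder_deg (lam : F) (k : int) (d : basis -> elt) : Prop :=
  [/\ forall (a : bool) v, in_parity a v -> in_parity a (lin_ext d v),
      forall q v, in_degree q v -> in_degree (q + k) (lin_ext d v)
    & forall x y (a b : bool), in_parity a x -> in_parity b y ->
        eq_elt (lin_ext d (br lam x y))
               (br lam (lin_ext d x) y ++ br lam x (lin_ext d y))].
End Alg.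

(* Main.v *)
Require Import Defs.
From HB Require Import structures.
From mathcomp Require Import all_boot all_order all_algebra.
From mathcomp Require Import zify ring lra.
Set Implicit Arguments. Unset Strict Implicit.
Import Order.TTheory GRing.Theory Num.Theory.
Local Open Scope ring_scope.

Lemma coef_cat (F : fieldType) (v w : elt F) e : coef (v ++ w) e = coef v e + coef w e.
Proof. by rewrite /coef big_cat. Qed.

Lemma coef_scale (F : fieldType) (a : F) (v : elt F) e : coef (scale_elt a v) e = a * coef v e.
Proof. by rewrite /coef /scale_elt big_map /= mulr_sumr. Qed.

Lemma coef_flatten (F : fieldType) (s : seq (elt F)) e :
  coef (flatten s) e = \sum_(v <- s) coef v e.
Proof.
elim: s => [|v s IH]; first by rewrite big_nil /coef big_nil.
by rewrite /= coef_cat IH big_cons.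
Qed.

Lemma coef_nil (F : fieldType) e : coef ([::] : elt F) e = 0.
Proof. by rewrite /coef big_nil. Qed.

Lemma coef_cons (F : fieldType) (c : F) f (v : elt F) e :
  coef ((c, f) :: v) e = (if f == e then c else 0) + coef v e.
Proof. rewrite /coef big_cons /=; case: ifP => _ //; by rewrite add0r. Qed.

Lemma coef_lin_ext (F : fieldType) (d : basis -> elt F) v e :
  coef (lin_ext d v) e = \sum_(p <- v) p.1 * coef (d p.2) e.
Proof.
rewrite /lin_ext coef_flatten big_map; apply: eq_bigr => p _.
by rewrite coef_scale.
Qed.

Lemma coef_br (F : fieldType) (lam : F) v w e :
  coef (br lam v w) e =
  \sum_(p <- v) \sum_(q <- w) p.1 * q.1 * coef (bbr lam p.2 q.2) e.
Proof.
rewrite /br coef_flatten big_allpairs_dep; apply: eq_bigr => p _.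
apply: eq_bigr => q _; by rewrite coef_scale.
Qed.

Lemma sum_supp (F : fieldType) (w : elt F) (S : seq basis) (h : basis -> F) :
  uniq S -> (forall f, f \notin S -> coef w f = 0) ->
  \sum_(p <- w) p.1 * h p.2 = \sum_(f <- S) coef w f * h f.
Proof.
move=> uS hS.
set T := S ++ [seq f <- undup (map snd w) | f \notin S].
have uT : uniq T.
  rewrite /T cat_uniq uS filter_uniq ?undup_uniq //= andbT.
  apply/hasPn => f; by rewrite mem_filter => /andP [].
have inT p : p \in w -> p.2 \in T.
  move=> pw; rewrite /T mem_cat mem_filter mem_undup.
  case: (boolP (p.2 \in S)) => //= _; apply/mapP; by exists p.
have step1 : \sum_(p <- w) p.1 * h p.2 =
   \sum_(p <- w) \sum_(f <- T) (if p.2 == f then p.1 * h f else 0).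
  rewrite big_seq [RHS]big_seq; apply: eq_bigr => p pw.
  rewrite (bigD1_seq p.2) ?inT //= eqxx big1 ?addr0 //.
  by move=> f /negbTE; rewrite eq_sym => ->.
rewrite step1 exchange_big /= /T big_cat /=.
have E f : \sum_(p <- w) (if p.2 == f then p.1 * h f else 0) = coef w f * h f.
  by rewrite /coef mulr_suml /= [RHS]big_mkcond.
rewrite [X in _ + X]big1_seq ?addr0.
  by apply: eq_bigr => f _; rewrite E.
move=> f /=; rewrite mem_filter; case/andP=> fS _.
by rewrite E (hS f fS) mul0r.
Qed.

Lemma eqbE (x y : basis) : (x == y) = (basis_code x == basis_code y).
Proof. by []. Qed.

Definition Sb (k : int) (y : basis) : seq basis :=
  if bpar y then [:: bG (bdeg y + k); bH (bdeg y + k)]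
  else [:: bL (bdeg y + k); bI (bdeg y + k)].

Lemma Sb_uniq k y : uniq (Sb k y).
Proof. by rewrite /Sb; case: (bpar y). Qed.

Lemma coef1 (F : fieldType) (y e : basis) : coef ([:: (1, y)] : elt F) e = if y == e then 1 else 0.
Proof. by rewrite coef_cons coef_nil addr0. Qed.

Lemma in_par1 (F : fieldType) y : in_parity (bpar y) ([:: (1, y)] : elt F).
Proof. move=> e; rewrite coef1; case: (y =P e) => [->|_] //; by rewrite eqxx. Qed.

Lemma in_deg1 (F : fieldType) y : in_degree (bdeg y) ([:: (1, y)] : elt F).
Proof. move=> e; rewrite coef1; case: (y =P e) => [->|_] //; by rewrite eqxx. Qed.

Lemma lin1 (F : fieldType) (d : basis -> elt F) y e : coef (lin_ext d [:: (1, y)]) e = coef (d y) e.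
Proof. by rewrite coef_lin_ext big_cons big_nil addr0 mul1r. Qed.

Lemma supp (F : fieldType) (lam : F) k d (H : even_superder_deg lam k d) y f :
  f \notin Sb k y -> coef (d y) f = 0.
Proof.
case: H => Hp Hd _ => hf; apply/eqP; apply: contraNT hf => nz.
have := Hp _ _ (@in_par1 F y) f; rewrite lin1 => /(_ nz) ep.
have := Hd _ _ (@in_deg1 F y) f; rewrite lin1 => /(_ nz) ed.
rewrite /Sb -ep -ed; case: f {nz ep ed} => n /=; by rewrite !inE eqxx ?orbT.
Qed.

Lemma br11 (F : fieldType) (lam : F) x y :
  br lam [:: (1, x)] [:: (1, y)] = scale_elt (1 * 1) (bbr lam x y) ++ [::].
Proof. by []. Qed.

Lemma lin1s (F : fieldType) (d : basis -> elt F) x : lin_ext d [:: (1, x)] = scale_elt 1 (d x) ++ [::].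
Proof. by []. Qed.

Lemma deriv1 (F : fieldType) (lam : F) k d (H : even_superder_deg lam k d) y e :
  \sum_(p <- bbr lam (bL 0) y) p.1 * coef (d p.2) e =
  \sum_(f <- Sb k (bL 0)) coef (d (bL 0)) f * coef (bbr lam f y) e +
  \sum_(f <- Sb k y) coef (d y) f * coef (bbr lam (bL 0) f) e.
Proof.
have H' := H; case: H' => _ _ /(_ [:: (1, bL 0)] [:: (1, y)] false (bpar y)).
move=> /(_ (@in_par1 F (bL 0)) (@in_par1 F y) e).
have -> : coef (lin_ext d (br lam [:: (1, bL 0)] [:: (1, y)])) e =
   \sum_(p <- bbr lam (bL 0) y) p.1 * coef (d p.2) e.
  rewrite br11 cats0 coef_lin_ext /scale_elt big_map.
  by apply: eq_bigr => p _; rewrite !mul1r.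
move=> ->; rewrite coef_cat; congr (_ + _).
  rewrite coef_br lin1s cats0 /scale_elt big_map.
  rewrite -(@sum_supp F _ _ (fun f => coef (bbr lam f y) e) (Sb_uniq k (bL 0))).
    by apply: eq_bigr => p _; rewrite big_cons big_nil addr0 mulr1 mul1r.
  by move=> f hf; rewrite (supp H hf).
rewrite coef_br big_cons big_nil addr0 lin1s cats0 /scale_elt big_map.
rewrite -(@sum_supp F _ _ (fun f => coef (bbr lam (bL 0) f) e) (Sb_uniq k y)).
  by apply: eq_bigr => p _; rewrite !mul1r.
by move=> f hf; rewrite (supp H hf).
Qed.

Ltac inteqs := repeat match goal with
 | |- context [(?x == ?y :> int)] =>
    first [ rewrite (_ : (x == y) = true); last (by apply/eqP; lia)
          | rewrite (_ : (x == y) = false); last (by apply/negbTE/eqP => ?; lia) ]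
 end.

Ltac simpc := rewrite ?big_cons ?big_nil ?coef_cons ?coef_nil ?eqbE /= ?xpair_eqE /=; inteqs; rewrite /=.

Ltac solve1 D hk := let D' := fresh in move/eqP: (D); rewrite -subr_eq0 => /eqP D';
   apply: (mulfI hk); apply/eqP; rewrite -subr_eq0; apply/eqP;
   match type of D' with ?Z = 0 => first [ transitivity Z; [by field; rewrite ?hk | exact D']
     | transitivity (- Z); [by field; rewrite ?hk | by rewrite D' oppr0] ] end.

Lemma adL (F : fieldType) (lam : F) k d (H : even_superder_deg lam k d) (hk : k%:~R != 0 :> F) m e :
  coef (d (bL m)) e = coef (br lam [:: (coef (d (bL 0)) (bL k) / k%:~R, bL k);
                                        (coef (d (bL 0)) (bI k) / k%:~R, bI k)] [:: (1, bL m)]) e.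
Proof.
have D1 := deriv1 H (bL m) (bL (m + k)).
have D2 := deriv1 H (bL m) (bI (m + k)).
rewrite /Sb /= add0r in D1 D2.
move: D1 D2; simpc; rewrite !add0r => D1 D2.
case: e => n; case: (n =P m + k) => [->|hn]; simpc; rewrite ?addr0 //;
  try (apply: (supp H); rewrite /Sb /= ?inE; simpc; done).
all: try (solve1 D1 hk).
all: try (solve1 D2 hk).
Qed.

Lemma adI (F : fieldType) (lam : F) k d (H : even_superder_deg lam k d) (hk : k%:~R != 0 :> F) m e :
  coef (d (bI m)) e = coef (br lam [:: (coef (d (bL 0)) (bL k) / k%:~R, bL k);
                                        (coef (d (bL 0)) (bI k) / k%:~R, bI k)] [:: (1, bI m)]) e.
Proof.
have D1 := deriv1 H (bI m) (bL (m + k)).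
have D2 := deriv1 H (bI m) (bI (m + k)).
rewrite /Sb /= add0r in D1 D2.
move: D1 D2; simpc; rewrite !add0r => D1 D2.
case: e => n; case: (n =P m + k) => [->|hn]; simpc; rewrite ?addr0 //;
  try (apply: (supp H); rewrite /Sb /= ?inE; simpc; done).
all: try (solve1 D1 hk).
all: try (solve1 D2 hk).
Qed.

Lemma adH (F : fieldType) (lam : F) k d (H : even_superder_deg lam k d) (hk : k%:~R != 0 :> F) m e :
  coef (d (bH m)) e = coef (br lam [:: (coef (d (bL 0)) (bL k) / k%:~R, bL k);
                                        (coef (d (bL 0)) (bI k) / k%:~R, bI k)] [:: (1, bH m)]) e.
Proof.
have D1 := deriv1 H (bH m) (bG (m + k)).
have D2 := deriv1 H (bH m) (bH (m + k)).
rewrite /Sb /= add0r in D1 D2.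
move: D1 D2; simpc; rewrite !add0r => D1 D2.
have hu1 : coef (d (bH m)) (bG (m + k)) = 0 by solve1 D1 hk.
rewrite hu1 in D2.
case: e => n; case: (n =P m + k) => [->|hn]; simpc; rewrite ?addr0 //;
  try (apply: (supp H); rewrite /Sb /= ?inE; simpc; done).
all: try (solve1 D1 hk).
all: try (solve1 D2 hk).
Qed.

Lemma adG (F : fieldType) (lam : F) k d (H : even_superder_deg lam k d) (hk : k%:~R != 0 :> F) m e :
  coef (d (bG m)) e = coef (br lam [:: (coef (d (bL 0)) (bL k) / k%:~R, bL k);
                                        (coef (d (bL 0)) (bI k) / k%:~R, bI k)] [:: (1, bG m)]) e.
Proof.
have D1 := deriv1 H (bG m) (bG (m + k)).
have D2 := deriv1 H (bG m) (bH (m + k)).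
rewrite /Sb /= add0r in D1 D2.
move: D1 D2; simpc; rewrite !add0r => D1 D2.
rewrite (adH H hk) in D1; rewrite (adH H hk) in D2.
move: D1 D2; simpc => D1 D2.
have hu1 : coef (d (bG m)) (bG (m + k)) = coef (d (bL 0)) (bL k) / k%:~R * (k%:~R * Defs.half F - m%:~R) by solve1 D1 hk.
rewrite hu1 in D2.
case: e => n; case: (n =P m + k) => [->|hn]; simpc; rewrite ?addr0 //;
  try (apply: (supp H); rewrite /Sb /= ?inE; simpc; done).
all: try (rewrite hu1; field; rewrite ?hk; done).
all: try (solve1 D2 hk).
Qed.

Lemma char0_int (F : fieldType) (hF : [pchar F] =i pred0) (k : int) : k != 0 -> k%:~R != 0 :> F.
Proof.
have P := (pcharf0P F).1 hF.
case: k => n hn.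
  by rewrite [_%:~R]/= P; apply: contra hn => /eqP ->.
by rewrite NegzE rmorphN /= oppr_eq0 P.
Qed.

Theorem lemma2p2 (F : fieldType) (hF : [pchar F] =i pred0) (lam : F) (k : int)
  (hk : k != 0) (d : basis -> elt F) :
  even_superder_deg lam k d ->
  exists a b : F,
    forall v : elt F,
      eq_elt (lin_ext d v) (br lam [:: (a, bL k); (b, bI k)] v).
Proof.
move=> H; have hk' := char0_int hF hk.
exists (coef (d (bL 0)) (bL k) / k%:~R), (coef (d (bL 0)) (bI k) / k%:~R) => v e.
rewrite coef_lin_ext coef_br exchange_big /=; apply: eq_bigr => q _.
have -> : coef (d q.2) e = coef (br lam [:: (coef (d (bL 0)) (bL k) / k%:~R, bL k);
                                        (coef (d (bL 0)) (bI k) / k%:~R, bI k)] [:: (1, q.2)]) e.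
  by case: q.2 => m; [exact: adL | exact: adI | exact: adG | exact: adH].
rewrite coef_br !big_cons !big_nil /=; ring.
Qed.
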